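(* Let $(X,d)$ be a metric space with $|X|\geqslant 3$ in which every point is an accumulation point, and let $T\colon X\to X$ be a continuous generalized Ćirić–Reich–Rus type mapping with constants $\alpha,\lambda\geqslant 0$, $2\alpha+\frac{3\lambda}{2}<1$, i.e. $$d(Tx,Ty)+d(Ty,Tz)+d(Tx,Tz)\leqslant \alpha\big(d(x,y)+d(y,z)+d(z,x)\big)+\lambda\big(d(x,Tx)+d(y,Ty)+d(z,Tz)\big)$$ for all pairwise distinct $x,y,z\in X$. Then $T$ is a Ćirić–Reich–Rus type mapping with $b=c$, i.e. there exist $a,b\geqslant 0$ with $a+2b<1$ such that $$d(Tx,Ty)\leqslant a\,d(x,y)+b\,d(x,Tx)+b\,d(y,Ty)\quad\text{for all } x,y\in X.$$ *)

(* Defs.v *)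
From Stdlib Require Export Reals Lra.
Open Scope R_scope.

Definition is_metric {X : Type} (d : X -> X -> R) : Prop :=
  (forall x y, 0 <= d x y) /\
  (forall x y, d x y = 0 <-> x = y) /\
  (forall x y, d x y = d y x) /\
  (forall x y z, d x z <= d x y + d y z).

Definition metric_continuous {X : Type} (d : X -> X -> R) (T : X -> X) : Prop :=
  forall x eps, 0 < eps ->
    exists delta, 0 < delta /\ forall y, d x y < delta -> d (T x) (T y) < eps.

Definition accumulation_point {X : Type} (d : X -> X -> R) (x : X) : Prop :=
  forall eps, 0 < eps -> exists y, y <> x /\ d x y < eps.

Definition gen_CRR {X : Type} (d : X -> X -> R) (T : X -> X) (alpha lambda : R) : Prop :=
  forall x y z, x <> y -> y <> z -> x <> z ->
    d (T x) (T y) + d (T y) (T z) + d (T x) (T z)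
    <= alpha * (d x y + d y z + d z x) + lambda * (d x (T x) + d y (T y) + d z (T z)).

Definition CRR_bc {X : Type} (d : X -> X -> R) (T : X -> X) (a b : R) : Prop :=
  forall x y, d (T x) (T y) <= a * d x y + b * d x (T x) + b * d y (T y).

(* Main.v *)
Require Import Defs.
From Stdlib Require Import Reals Lra Classical.
Open Scope R_scope.

Lemma le_eps (A B : R) : (forall e, 0 < e -> A <= B + e) -> A <= B.
Proof.
  intros H. destruct (Rle_dec A B) as [h|h]; auto.
  specialize (H ((A - B)/2)). lra.
Qed.

Lemma key (X : Type) (d : X -> X -> R) (T : X -> X) (alpha lambda : R) :
  is_metric d ->
  (forall x : X, accumulation_point d x) ->
  metric_continuous d T ->
  0 <= alpha -> 0 <= lambda ->
  gen_CRR d T alpha lambda ->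
  forall x y, x <> y ->
  2 * d (T x) (T y) <= 2 * alpha * d x y + 2 * lambda * d x (T x) + lambda * d y (T y).
Proof.
  intros [d0 [deq [dsym dtri]]] Hacc Hc ha hl H x y hxy.
  apply le_eps; intros e he.
  set (e' := e / (2 * alpha + 2 * lambda + 1)).
  assert (he' : 0 < e') by (unfold e'; apply Rdiv_lt_0_compat; lra).
  assert (hee : (2 * alpha + 2 * lambda) * e' <= e).
  { unfold e'. apply (Rmult_le_reg_r (2 * alpha + 2 * lambda + 1)); [lra|].
    field_simplify; [| lra]. nra. }
  destruct (Hc x e' he') as [del [hdel Hdel]].
  assert (hxy0 : 0 < d x y).
  { destruct (d0 x y) as [h|h]; auto. exfalso; apply hxy, deq; auto. }
  destruct (Hacc x (Rmin del (Rmin e' (d x y)))) as [z [hzx hz]].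
  { apply Rmin_pos; auto. apply Rmin_pos; auto. }
  assert (h1 : d x z < del) by (eapply Rlt_le_trans; [exact hz| apply Rmin_l]).
  assert (h2 : d x z < e') by (eapply Rlt_le_trans; [exact hz| eapply Rle_trans; [apply Rmin_r| apply Rmin_l]]).
  assert (h3 : d x z < d x y) by (eapply Rlt_le_trans; [exact hz| eapply Rle_trans; [apply Rmin_r| apply Rmin_r]]).
  assert (hzy : y <> z) by (intro; subst; lra).
  assert (s := Hdel z h1).
  assert (G := H x y z hxy hzy (fun h => hzx (eq_sym h))).
  assert (t1 := dtri (T x) (T z) (T y)).
  assert (t2 := dtri y x z).
  assert (t3 := dtri z x (T z)).
  assert (t4 := dtri x (T x) (T z)).
  rewrite (dsym (T z) (T y)) in t1. rewrite (dsym y x) in t2. rewrite (dsym z x) in t3, G.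
  assert (A1 : alpha * d y z <= alpha * (d x y + d x z)) by (apply Rmult_le_compat_l; lra).
  assert (A2 : lambda * d z (T z) <= lambda * (d x z + (d x (T x) + d (T x) (T z)))) by (apply Rmult_le_compat_l; lra).
  assert (A3 : alpha * d x z <= alpha * e') by (apply Rmult_le_compat_l; lra).
  assert (A4 : lambda * d x z <= lambda * e') by (apply Rmult_le_compat_l; lra).
  assert (A5 : lambda * d (T x) (T z) <= lambda * e') by (apply Rmult_le_compat_l; lra).
  lra.
Qed.

Theorem corollary2p6 (X : Type) (d : X -> X -> R) (T : X -> X) (alpha lambda : R) :
  is_metric d ->
  (exists x y z : X, x <> y /\ y <> z /\ x <> z) ->
  (forall x : X, accumulation_point d x) ->
  metric_continuous d T ->
  0 <= alpha -> 0 <= lambda -> 2 * alpha + 3 * lambda / 2 < 1 ->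
  gen_CRR d T alpha lambda ->
  exists a b : R, 0 <= a /\ 0 <= b /\ a + 2 * b < 1 /\ CRR_bc d T a b.
Proof.
  intros Hm _ Hacc Hc ha hl hlt H.
  exists alpha, (3 * lambda / 4). split; [lra|]. split; [lra|]. split; [lra|].
  intros x y.
  destruct Hm as [d0 [deq [dsym dtri]]] eqn:E.
  destruct (classic (x = y)) as [e|ne].
  - subst. assert (d (T y) (T y) = 0) by (apply deq; auto).
    rewrite H0. pose proof (d0 y y). pose proof (d0 y (T y)). nra.
  - assert (k1 := key X d T alpha lambda Hm Hacc Hc ha hl H x y ne).
    assert (k2 := key X d T alpha lambda Hm Hacc Hc ha hl H y x (fun h => ne (eq_sym h))).
    rewrite (dsym (T y) (T x)), (dsym y x) in k2. lra.
Qed.
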